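(* There is an absolute constant $c>0$ such that for all natural numbers $1\le d\le n$ there exists a partial concept class $\mathbb{H}_{n,d}\subseteq\{0,1,\star\}^{[n]}$ with $d\le\mathrm{LD}(\mathbb{H}_{n,d})\le d+1$ whose SOA disambiguation $\overline{\mathbb{H}_{n,d}}^{\mathrm{SOA}}$ (with respect to the natural ordering $1,2,\dots,n$ of $[n]$) has $\mathrm{VC}\big(\overline{\mathbb{H}_{n,d}}^{\mathrm{SOA}}\big)\ge c\, d\log(n/d)$.
   Context: A partial concept class on $[n]$ is a set $\mathbb{H}\subseteq\{0,1,\star\}^{[n]}$. VC dimension: the largest size of a set $S\subseteq[n]$ such that every $0/1$ pattern on $S$ is realized by some $h\in\mathbb{H}$. Littlestone dimension $\mathrm{LD}(\mathbb{H})$: the largest $d$ such that there is a full binary tree of height $d$, internal nodes $v\in\bigcup_{k<d}\{0,1\}^k$ labelled by points $x_v$, such that for every $y\in\{0,1\}^d$ some $h\in\mathbb{H}$ has $h(x_{y_1\cdots y_{i-1}})=y_i$ for all $i\in[d]$; by convention $\mathrm{LD}(\emptyset)=-1$. For a class $\mathbb{H}$ and $\vec b\in\{0,1,\star\}^k$ let $\mathbb{H}|_{\vec b}=\{h\in\mathbb{H}: h(i)=b_i \text{ for all } i\in[k]\}$ (with $\mathbb{H}|_{()}=\mathbb{H}$). The SOA disambiguation $\overline{\mathbb{H}}^{\mathrm{SOA}}$ is produced iteratively: for $k=1,2,\dots,n$, given the current class (in which all values at points $1,\dots,k-1$ are already in $\{0,1\}$), for every $\vec b\in\{0,1\}^{k-1}$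 choose $c\in\{0,1\}$ maximizing $\mathrm{LD}(\mathbb{H}|_{\vec b c})$ (ties broken in favour of $c=0$), and redefine $h(k):=c$ for every $h\in\mathbb{H}|_{\vec b\star}$. The resulting total class is $\overline{\mathbb{H}}^{\mathrm{SOA}}$. *)

(* Defs.v *)
From Stdlib Require Import ClassicalEpsilon.
From mathcomp Require Import all_boot all_order all_algebra.

Set Implicit Arguments.
Unset Strict Implicit.
Unset Printing Implicit Defensive.
Import Order.TTheory GRing.Theory Num.Theory.

(* Points of [n] are the ordinals 'I_n (point i+1 of the paper is i : 'I_n).
   Values {0,1,*} are encoded as option bool: Some false = 0, Some true = 1,
   None = * (undefined). *)
Definition concept (n : nat) := {ffun 'I_n -> option bool}.
Definition pclass (n : nat) := {set concept n}.

Definition shattered n (H : pclass n) (S : {set 'I_n}) : bool :=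
  [forall f : {ffun 'I_n -> bool},
     [exists h in H, [forall x in S, h x == Some (f x)]]].

Definition VC n (H : pclass n) : nat :=
  \max_(S : {set 'I_n} | shattered H S) #|S|.

(* A Littlestone (mistake) tree of height d: internal nodes v in {0,1}^k,
   k < d, are labelled by points T v; every branch y in {0,1}^d is realized
   by some h in H, i.e. h (T (y_1 ... y_{i-1})) = y_i for all i. *)
Definition has_ltree n (H : pclass n) (d : nat) : Prop :=
  exists T : seq bool -> 'I_n,
    forall y : d.-tuple bool,
      exists2 h, h \in H &
        forall i : 'I_d, h (T (take i y)) = Some (tnth y i).

Definition has_ltreeb n (H : pclass n) (d : nat) : bool :=
  if excluded_middle_informative (has_ltree H d) then true else false.

(* Littlestone dimension, with LD(empty) = -1.  For nonempty H over [n]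
   any Littlestone tree has height at most n (a point cannot repeat along
   a branch), so the maximum over heights d <= n is the true maximum. *)
Definition LD n (H : pclass n) : int :=
  if H == set0 then (-1)%R
  else Posz (\max_(d < n.+1 | has_ltreeb H d) d).

(* H|_{b c}: concepts of H agreeing with the (already total) prefix of h on
   the points before k, and taking value c at k. *)
Definition restrict_prefix n (H : pclass n) (h : concept n) (k : 'I_n)
    (c : option bool) : pclass n :=
  [set g in H | [forall i : 'I_n, (i < k)%N ==> (g i == h i)] && (g k == c)].

(* The SOA choice at step k for the prefix of h: c maximizing
   LD(H|_{b c}), ties broken in favour of 0 (= false). *)
Definition soa_choice n (H : pclass n) (h : concept n) (k : 'I_n) : bool :=
  (LD (restrict_prefix H h k (Some false)) < LD (restrict_prefix H h k (Some true)))%R.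

Definition soa_update n (H : pclass n) (k : 'I_n) (h : concept n) : concept n :=
  if h k is None
  then [ffun i => if i == k then Some (soa_choice H h k) else h i]
  else h.

Definition soa_step n (H : pclass n) (k : 'I_n) : pclass n :=
  [set soa_update H k h | h in H].

Definition SOA_disamb n (H : pclass n) : pclass n :=
  foldl (@soa_step n) H (enum 'I_n).

(* Main.v *)
Require Import Defs.
From Stdlib Require Import ClassicalEpsilon.
From mathcomp Require Import all_boot all_order all_algebra.
From mathcomp Require Import all_classical all_reals all_analysis.
From mathcomp Require Import Rstruct.
From mathcomp Require Import zify.
From mathcomp Require Import finset fintype bigop finfun.
Import Order.TTheory GRing.Theory Num.Theory.

Set Implicit Arguments. Unset Strict Implicit. Unset Printing Implicit Defensive.

Section Generic.
Variable n : nat.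

Lemma has_ltreebE (H : pclass n) D : has_ltreeb H D = true <-> has_ltree H D.
Proof. by rewrite /has_ltreeb; case: excluded_middle_informative. Qed.

Lemma LD_set0 : LD (set0 : pclass n) = (-1)%R.
Proof. by rewrite /LD eqxx. Qed.

Lemma LD_ge0 (H : pclass n) : H != set0 -> (0 <= LD H)%R.
Proof. by move=> /negbTE hH; rewrite /LD hH. Qed.

Lemma ltree_ones (H : pclass n) D M :
  (forall h, h \in H -> #|[set i | h i == Some true]| <= M) ->
  has_ltree H D -> D <= M.
Proof.
move=> hM [T hT].
have [h hH hh] := hT [tuple of nseq D true].
pose x := fun i : 'I_D => T (take i (nseq D true)).
have xinj : injective x.
  have key : forall i j : 'I_D, i < j -> x i <> x j.
    move=> i j ltij eij.
    pose y' := mktuple (fun s : 'I_D => s != j).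
    have tk : forall s, s <= j -> take s y' = take s (nseq D true).
      move=> s lesj; apply: (@eq_from_nth _ false).
        by rewrite !size_take size_tuple size_nseq.
      move=> r; rewrite size_take size_tuple => hr.
      have sD : s <= D := leq_trans lesj (ltnW (ltn_ord j)).
      have rs : r < s by move: hr; case: (ltnP s D) => // hDs hr; exact: leq_trans hr hDs.
      have rD : r < D := leq_trans rs sD.
      rewrite !nth_take // nth_nseq rD (nth_mktuple _ _ (Ordinal rD)).
      apply/eqP => /(congr1 val) /= erj.
      by move: (leq_trans rs lesj); rewrite erj ltnn.
    have [h' _ hh'] := hT y'.
    have e1 := hh' i; have e2 := hh' j.
    rewrite tk ?(ltnW ltij) // -/(x i) in e1.
    rewrite tk // -/(x j) in e2.
    rewrite eij e2 in e1.
    move: e1; rewrite !(tnth_nth false) !nth_mktuple eqxx => -[] /eqP.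
    by apply/negP; rewrite negbK; apply/negP => /eqP eqij; move: ltij; rewrite eqij ltnn.
  move=> i j eij; apply/eqP; case: (ltngtP i j) => [l|l|/val_inj -> //].
    by have := key _ _ l eij.
  by have := key _ _ l (esym eij).
have sub : [set x i | i : 'I_D] \subset [set i | h i == Some true].
  apply/subsetP => z /imsetP [i _ ->]; rewrite inE.
  by have := hh i; rewrite tnth_nseq => ->.
have := subset_leq_card sub; rewrite card_imset // card_ord => hD.
exact: leq_trans hD (hM _ hH).
Qed.

Lemma ltree_of_shatter (H : pclass n) D (p : 'I_D -> 'I_n) (x0 : 'I_n) :
  (forall y : D.-tuple bool, exists2 h, h \in H & forall i, h (p i) = Some (tnth y i)) ->
  has_ltree H D.
Proof.
move=> hy; exists (fun s => if insub (size s) is Some i then p i else x0).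
move=> y; have [h hH hh] := hy y; exists h => // i.
have -> : insub (size (take i y)) = Some i.
  have -> : size (take i y) = val i by rewrite size_take size_tuple ltn_ord.
  exact: valK.
exact: hh.
Qed.

Lemma LD_bounds (H : pclass n) d : H != set0 -> d <= n -> has_ltree H d ->
  (forall D, has_ltree H D -> D <= d.+1) -> (Posz d <= LD H <= Posz d + 1)%R.
Proof.
move=> hne dn hd hD; rewrite /LD (negbTE hne).
have -> : (Posz d + 1)%R = Posz d.+1 by rewrite -addn1 PoszD.
rewrite !lez_nat.
apply/andP; split.
  have dn1 : d < n.+1 by [].
  apply: (@leq_bigmax_cond _ (fun D : 'I_n.+1 => has_ltreeb H D) _ (Ordinal dn1)).
  by apply/has_ltreebE.
by apply/bigmax_leqP => i /has_ltreebE /hD.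
Qed.

Lemma VC_ge (H : pclass n) S : shattered H S -> #|S| <= VC H.
Proof. by move=> hS; rewrite /VC; apply: (@leq_bigmax_cond _ (fun S0 => shattered H S0) (fun S0 => #|S0|) S hS). Qed.

Lemma soa_step_total (H : pclass n) k :
  (forall h, h \in H -> forall i, h i != None) -> soa_step H k = H.
Proof.
move=> tot; apply/setP => h; rewrite /soa_step; apply/imsetP/idP.
  case=> g gH ->; rewrite /soa_update; case E: (g k) => [b|] //.
  by have := tot g gH k; rewrite E.
move=> hH; exists h => //; rewrite /soa_update; case E: (h k) => //.
by have := tot h hH k; rewrite E.
Qed.

Lemma SOA_total (H : pclass n) :
  (forall h, h \in H -> forall i, h i != None) -> SOA_disamb H = H.
Proof.
move=> tot; rewrite /SOA_disamb; elim: (enum 'I_n) => //= k s IH.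
by rewrite soa_step_total.
Qed.

End Generic.



Section Block.
Variables n' d' l' : nat.
Local Notation n := n'.+1.
Local Notation d := d'.+1.
Local Notation l := l'.+1.
Local Notation Bk := {ffun 'I_l -> bool}.
Local Notation B := #|Bk|.
Local Notation A := {ffun 'I_d -> Bk}.
Hypothesis hsize : d * B + d * l <= n.

Lemma B_gt0 : 0 < B.
Proof. by apply/card_gt0P; exists [ffun _ => false]. Qed.

Definition gval (a : A) (i : nat) : bool :=
  i %% B == enum_rank (a (inord (i %/ B))).
Definition patbit (a : A) (i : nat) : bool :=
  a (inord ((i - d * B) %/ l)) (inord ((i - d * B) %% l)).

Definition conc (x : A * 'I_n) : concept n :=
  [ffun i : 'I_n => if i < d * B then Some (gval x.1 i)
    else if i < d * B + d * l then (if i == x.2 then Some (patbit x.1 i) else None)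
    else Some false].

Definition Hb : pclass n := [set conc x | x : A * 'I_n].

Definition cur (t : nat) (x : A * 'I_n) : concept n :=
  [ffun i : 'I_n => if (i < t) && (conc x i == None) then Some (patbit x.1 i) else conc x i].
Definition Hcur t : pclass n := [set cur t x | x : A * 'I_n].

Lemma gval_block (a : A) (tt : 'I_d) r : r < B ->
  gval a (tt * B + r) = (r == enum_rank (a tt)).
Proof.
move=> rB; rewrite /gval modnMDl modn_small // divnMDl ?B_gt0 // divn_small // addn0.
by rewrite inord_val.
Qed.

Lemma gval_inj (a b : A) : (forall i, i < d * B -> gval a i = gval b i) -> a = b.
Proof.
move=> h; apply/ffunP => tt.
have rB := ltn_ord (enum_rank (a tt)).
have lt : tt * B + enum_rank (a tt) < d * B.
  apply: (leq_trans (n := tt.+1 * B)); first by rewrite mulSn addnC ltn_add2r.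
  by rewrite leq_mul2r ltn_ord orbT.
have := h _ lt; rewrite !gval_block // eqxx => /esym /eqP /val_inj.
exact: enum_rank_inj.
Qed.

Lemma curE t y i : cur t y i = if (i < t) && (conc y i == None) then Some (patbit y.1 i) else conc y i.
Proof. by rewrite ffunE. Qed.

Lemma cur0 x : cur 0 x = conc x.
Proof. by apply/ffunP => i; rewrite !ffunE. Qed.

Lemma Hcur0 : Hcur 0 = Hb.
Proof. by apply/setP => h; rewrite /Hcur /Hb; apply/imsetP/imsetP => -[x _ ->]; exists x; rewrite ?cur0. Qed.

Lemma cur_S t y (i : 'I_n) : i < t -> d * B <= i < d * B + d * l ->
  cur t y i = Some (patbit y.1 i).
Proof.
move=> it /andP [h1 h2]; rewrite !ffunE it ltnNge h1 /= h2.
by case: (i == y.2).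
Qed.

Lemma cur_G t y (i : 'I_n) : i < d * B -> cur t y i = Some (gval y.1 i).
Proof. by move=> hi; rewrite !ffunE hi andbF. Qed.

Lemma cur_ge t y (i : 'I_n) : t <= i -> cur t y i = conc y i.
Proof. by move=> hi; rewrite ffunE ltnNge hi. Qed.

Section Step.
Variable t : nat.
Variable pt : 'I_n.
Hypothesis hpt : val pt = t.

Lemma choice_ok x : conc x pt = None ->
  soa_choice (Hcur t) (cur t x) pt = patbit x.1 pt.
Proof.
move=> hN.
have hG : d * B <= pt.
  by rewrite leqNgt; apply/negP => hlt; move: hN; rewrite ffunE hlt.
have hS : pt < d * B + d * l.
  by rewrite ltnNge; apply/negP => hlt; move: hN; rewrite ffunE ltnNge hG /= ltnNge hlt.
have hx2 : pt == x.2 = false.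
  by move: hN; rewrite ffunE ltnNge hG /= hS; case: (pt == x.2).
pose side c := restrict_prefix (Hcur t) (cur t x) pt (Some c).
have in_side : cur t (x.1, pt) \in side (patbit x.1 pt).
  rewrite inE; apply/andP; split; first by apply/imsetP; exists (x.1, pt).
  apply/andP; split.
    apply/forallP => i; apply/implyP => ipt.
    case: (ltnP i (d * B)) => hi.
      by rewrite !cur_G.
    have it : i < t by rewrite -hpt.
    have hiS : d * B <= i < d * B + d * l by rewrite hi (ltn_trans ipt hS).
    by rewrite !cur_S.
  by rewrite !ffunE -hpt ltnn /= ltnNge hG /= hS eqxx.
have side_other : side (~~ patbit x.1 pt) = set0.
  apply/setP => g; rewrite inE in_set0; apply/negP => /andP [/imsetP [y _ ->]].
  move=> /andP [/forallP hpre].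
  rewrite cur_ge -?hpt // ffunE ltnNge hG /= hS.
  case: ifP => // /eqP ept /eqP [].
  have -> : y.1 = x.1.
    apply: gval_inj => i hi.
    have hin : i < n by apply: leq_trans hi (leq_trans (leq_addr _ _) hsize).
    have := hpre (Ordinal hin); rewrite /= (leq_trans hi hG) /= !cur_G //.
    by move=> /eqP [].
  by case: (patbit x.1 pt).
rewrite /soa_choice -/(side false) -/(side true).
have ne : side (patbit x.1 pt) != set0.
  by apply/set0Pn; exists (cur t (x.1, pt)).
case E: (patbit x.1 pt).
  have := side_other; rewrite E /= => ->; rewrite LD_set0.
  have := LD_ge0 ne; rewrite E => h0.
  by apply: (lt_le_trans _ h0).
have := side_other; rewrite E /= => ->; rewrite LD_set0.
have := LD_ge0 ne; rewrite E => h0.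
by apply/negbTE; rewrite -leNgt; apply: le_trans h0.
Qed.

Lemma update_ok x : soa_update (Hcur t) pt (cur t x) = cur t.+1 x.
Proof.
have hi : forall i : 'I_n, i != pt -> (i < t.+1) = (i < t).
  move=> i ipt; rewrite ltnS leq_eqVlt -hpt.
  by have -> : (val i == val pt) = false by apply/negbTE.
rewrite /soa_update.
case E: (cur t x pt) => [b|].
  apply/ffunP => i; rewrite !curE.
  case: (eqVneq i pt) => [->|ipt]; last by rewrite hi.
  rewrite hpt ltnn ltnSn /=.
  by move: E; rewrite curE hpt ltnn /= => ->.
have hN : conc x pt = None by move: E; rewrite curE hpt ltnn.
rewrite choice_ok //.
apply/ffunP => i; rewrite ffunE !curE.
case: (eqVneq i pt) => [->|ipt]; last by rewrite hi.
by rewrite hpt ltnSn hN.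
Qed.

Lemma step_ok : soa_step (Hcur t) pt = Hcur t.+1.
Proof.
apply/setP => h; rewrite /soa_step; apply/imsetP/imsetP.
  by case=> g /imsetP [x _ ->] ->; exists x => //; rewrite update_ok.
case=> x _ ->; exists (cur t x); first by apply/imsetP; exists x.
by rewrite update_ok.
Qed.
End Step.

Lemma fold_ok (s : seq 'I_n) t : map val s = iota t (size s) ->
  foldl (@soa_step n) (Hcur t) s = Hcur (t + size s).
Proof.
elim: s t => [|k s IH] t /=; first by rewrite addn0.
by case=> hk hs; rewrite (step_ok hk) IH // addSnnS.
Qed.

Lemma SOA_Hb : SOA_disamb Hb = Hcur n.
Proof.
rewrite /SOA_disamb -Hcur0.
have := @fold_ok (enum 'I_n) 0; rewrite val_enum_ord size_enum_ord.
by move=> /(_ erefl).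
Qed.


Lemma dBn : d * B < n.+1.
Proof. by apply: leq_trans (leq_addr _ _) hsize. Qed.

Lemma lt_gp (tt : 'I_d) r : r < B -> tt * B + r < d * B.
Proof.
move=> rB; apply: (leq_trans (n := tt.+1 * B)); first by rewrite mulSn addnC ltn_add2r.
by rewrite leq_mul2r ltn_ord orbT.
Qed.

Lemma Hb_ne : Hb != set0.
Proof. by apply/set0Pn; exists (conc ([ffun _ => [ffun _ => false]], ord0)); apply/imsetP; eexists. Qed.

Lemma Hb_ones h : h \in Hb -> #|[set i | h i == Some true]| <= d.+1.
Proof.
case/imsetP => x _ ->.
pose gp (tt : 'I_d) : 'I_n := inord (tt * B + enum_rank (x.1 tt)).
have sub : [set i | conc x i == Some true] \subset [set gp tt | tt : 'I_d] :|: [set x.2].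
  apply/subsetP => i; rewrite inE ffunE.
  case: ifP => hi.
    rewrite /gval => /eqP [] /eqP hr.
    have tlt : i %/ B < d by rewrite ltn_divLR ?B_gt0.
    rewrite inE; apply/orP; left; apply/imsetP; exists (inord (i %/ B)) => //.
    apply/val_inj; rewrite /gp /= -hr (inordK tlt) -divn_eq.
    by rewrite inordK.
  case: ifP => // _; case: ifP => // /eqP -> _.
  by rewrite inE set11 orbT.
apply: leq_trans (subset_leq_card sub) _.
rewrite cardsU cards1; apply: leq_trans (leq_subr _ _) _; rewrite addn1 ltnS.
by apply: leq_trans (leq_imset_card _ _) _; rewrite card_ord.
Qed.

Lemma Hb_tree : has_ltree Hb d.
Proof.
pose e0 : Bk := [ffun _ => false].
pose e1 : Bk := [ffun _ => true].
have e01 : (enum_rank e0 == enum_rank e1 :> nat) = false.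
  apply/negbTE/negP => /eqP /val_inj /enum_rank_inj /ffunP /(_ ord0); rewrite !ffunE.
  by [].
apply: (@ltree_of_shatter _ _ _ (fun tt : 'I_d => inord (tt * B + enum_rank e0)) ord0).
move=> y; exists (conc ([ffun tt => if tnth y tt then e0 else e1], ord0)).
  by apply/imsetP; eexists.
move=> tt; have hlt := lt_gp tt (ltn_ord (enum_rank e0)).
have hv : (inord (tt * B + enum_rank e0) : 'I_n) = tt * B + enum_rank e0 :> nat.
  by rewrite inordK // (leq_trans hlt dBn).
rewrite ffunE hv hlt /= gval_block // ffunE.
by case: (tnth y tt); rewrite ?eqxx ?e01.
Qed.

Lemma d_le_n : d <= n.
Proof.
apply: (@leq_trans (d * B)); last exact: dBn.
by rewrite leq_pmulr ?B_gt0.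
Qed.

Lemma LD_Hb : (Posz d <= LD Hb <= Posz d + 1)%R.
Proof.
apply: LD_bounds Hb_ne d_le_n Hb_tree _ => D hD.
exact: ltree_ones Hb_ones hD.
Qed.

Lemma VC_Hb : d * l <= VC (SOA_disamb Hb).
Proof.
rewrite SOA_Hb.
pose S := [set (inord (d * B + j) : 'I_n) | j : 'I_(d * l)].
have hjn : forall j : 'I_(d * l), d * B + j < n.
  by move=> j; apply: leq_trans hsize; rewrite ltn_add2l.
have cS : #|S| = d * l.
  rewrite card_imset ?card_ord // => j j' /(congr1 (@nat_of_ord _)).
  rewrite !inordK ?hjn // => /eqP; rewrite eqn_add2l => /eqP.
  exact: val_inj.
rewrite -cS; apply: VC_ge.
apply/forallP => f.
pose a : A := [ffun tt : 'I_d => [ffun s : 'I_l => f (inord (d * B + (tt * l + s)))]].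
apply/existsP; exists (cur n (a, ord0)); apply/andP; split.
  by apply/imsetP; eexists.
apply/forallP => z; apply/implyP => /imsetP [j _ ->].
have hz : (inord (d * B + j) : 'I_n) = d * B + j :> nat by rewrite inordK.
rewrite cur_S; last first.
- by rewrite hz leq_addr ltn_add2l ltn_ord.
- by rewrite hz.
rewrite /patbit hz addKn /=.
have jd : j %/ l < d by rewrite ltn_divLR // ltn_ord.
have jl : j %% l < l by rewrite ltn_pmod.
by rewrite !ffunE !inordK // -divn_eq.
Qed.

End Block.



Section Triv.
Variables n' d' : nat.
Local Notation n := n'.+1.
Local Notation d := d'.+1.
Hypothesis hdn : d <= n.

Definition concT (f : {ffun 'I_d -> bool}) : concept n :=
  [ffun i : 'I_n => Some (if i < d then f (inord i) else false)].
Definition Ht : pclass n := [set concT f | f : {ffun 'I_d -> bool}].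

Lemma Ht_total h : h \in Ht -> forall i, h i != None.
Proof. by case/imsetP => f _ -> i; rewrite ffunE. Qed.

Lemma ordn (tt : 'I_d) : (inord tt : 'I_n) = tt :> nat.
Proof. by rewrite inordK // (leq_trans (ltn_ord tt) hdn). Qed.

Lemma LD_Ht : (Posz d <= LD Ht <= Posz d + 1)%R.
Proof.
apply: LD_bounds => //.
- by apply/set0Pn; exists (concT [ffun _ => false]); apply/imsetP; eexists.
- apply: (@ltree_of_shatter _ _ _ (fun tt : 'I_d => inord tt) ord0) => y.
  exists (concT [ffun tt => tnth y tt]); first by apply/imsetP; eexists.
  by move=> tt; rewrite ffunE ordn ltn_ord inord_val ffunE.
- move=> D hD; apply: (ltree_ones _ hD) => h /imsetP [f _ ->].
  have sub : [set i | concT f i == Some true] \subset [set (inord tt : 'I_n) | tt : 'I_d].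
    apply/subsetP => i; rewrite inE ffunE; case: ifP => // hi _.
    apply/imsetP; exists (inord i) => //; apply: ord_inj.
    by rewrite ordn inordK.
  apply: leq_trans (subset_leq_card sub) _.
  by apply: leq_trans (leq_imset_card _ _) _; rewrite card_ord.
Qed.

Lemma VC_Ht : d <= VC (SOA_disamb Ht).
Proof.
rewrite SOA_total; last exact: Ht_total.
pose S := [set (inord tt : 'I_n) | tt : 'I_d].
have cS : #|S| = d.
  rewrite card_imset ?card_ord // => j j' /(congr1 (@nat_of_ord _)).
  by rewrite !ordn => /val_inj.
rewrite -cS; apply: VC_ge; apply/forallP => f.
apply/existsP; exists (concT [ffun tt : 'I_d => f (inord tt)]); apply/andP; split.
  by apply/imsetP; eexists.
apply/forallP => z; apply/implyP => /imsetP [tt _ ->].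
by rewrite ffunE ordn ltn_ord inord_val ffunE.
Qed.
End Triv.

Local Open Scope ring_scope.

Lemma lnq (n d K : nat) : (0 < d)%N -> (0 < n)%N -> (n < 2 ^ K * d)%N ->
  ln (n%:R / d%:R : Rdefinitions.R) <= (2 * K)%:R.
Proof.
move=> d0 n0 hK.
have dpos : 0 < (d%:R : Rdefinitions.R) by rewrite ltr0n.
have npos : 0 < (n%:R : Rdefinitions.R) by rewrite ltr0n.
have h1 : (n%:R / d%:R : Rdefinitions.R) <= 2 ^+ K.
  rewrite ler_pdivrMr // -natrX -natrM ler_nat; exact: ltnW.
have h2 : ln (n%:R / d%:R : Rdefinitions.R) <= ln (2 ^+ K).
  by rewrite ler_ln // posrE ?divr_gt0 ?exprn_gt0.
apply: le_trans h2 _; rewrite lnXn // natrM -[X in X <= _]mulr_natr ler_wpM2r //.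
by apply: ltW; apply: ln_sublinear.
Qed.

Lemma final_ineq (d K m V : nat) (x : Rdefinitions.R) : x <= (2 * K)%:R ->
  (d * (2 * K) <= 6 * m)%N -> (m <= V)%N -> 1 / 6 * d%:R * x <= V%:R.
Proof.
move=> hx hdm hmV.
apply: (@le_trans _ _ (1 / 6 * d%:R * (2 * K)%:R)).
  by rewrite ler_wpM2l // mulr_ge0 // divr_ge0.
rewrite -mulrA -natrM.
apply: (@le_trans _ _ (1 / 6 * (6 * m)%:R)).
  by rewrite ler_wpM2l ?divr_ge0 // ler_nat.
rewrite natrM mulrA div1r mulVf // mul1r ler_nat //.
Qed.

Theorem theorem1p9 :
  exists c : Rdefinitions.R, 0 < c /\
    forall n d : nat, (1 <= d)%N -> (d <= n)%N ->
      exists H : pclass n,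
        (Posz d <= LD H <= Posz d + 1) /\
        c * d%:R * ln (n%:R / d%:R) <= (VC (SOA_disamb H))%:R.
Proof.
exists (1 / 6); split; first by rewrite divr_gt0.
move=> [|n'] [|d'] // _ hdn.
case: (ltnP n'.+1 (4 * d'.+1)) => hsm.
  exists (Ht n' d'); split; first exact: LD_Ht.
  apply: (@final_ineq _ 2 d'.+1); last exact: VC_Ht.
    by apply: lnq => //; rewrite mul2n.
  by lia.
set q := (n'.+1 %/ d'.+1)%N.
have q4 : (2 ^ 2 <= q)%N by rewrite leq_divRL.
set L := trunc_log 2 q.
have L2 : (2 <= L)%N by apply: trunc_log_max.
have qL : (2 ^ L <= q)%N by apply: trunc_logP => //; apply: leq_trans q4.
have qL1 : (q < 2 ^ L.+1)%N by apply: trunc_log_ltn.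
have nL : (n'.+1 < 2 ^ L.+1 * d'.+1)%N by rewrite -ltn_divLR.
pose l' := (L - 2)%N.
have hL : L = l'.+2 by rewrite /l'; lia.
have cardB : #|{ffun 'I_l'.+1 -> bool}| = (2 ^ l'.+1)%N by rewrite card_ffun card_bool card_ord.
have hsize : (d'.+1 * #|{ffun 'I_l'.+1 -> bool}| + d'.+1 * l'.+1 <= n'.+1)%N.
  rewrite cardB -mulnDr; apply: (@leq_trans (d'.+1 * q)); last first.
    by rewrite mulnC leq_trunc_div.
  rewrite leq_mul2l /=; apply: leq_trans qL; rewrite hL [in X in (_ <= X)%N]expnS mul2n -addnn leq_add2l.
  exact: ltnW (ltn_expl _ (ltnSn 1)).
exists (Hb n' d' l'); split; first exact: (LD_Hb hsize).
apply: (@final_ineq _ L.+1 (d'.+1 * l'.+1)); last exact: (VC_Hb hsize).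
  by apply: lnq.
rewrite hL; lia.
Qed.
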